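(* Let $\phi=\tilde p/p$ be an irreducible rational inner function on $\mathbb{D}^3$ of degree $(m,n,1)$ with $p(z)=p_1(z_1,z_2)+z_3p_2(z_1,z_2)$. Then there are at most finitely many $(\zeta_1,\zeta_2)\in\mathbb{T}^2$ such that $\mathcal{Z}_p\cap\mathbb{T}^3$ contains the vertical line $\{(\zeta_1,\zeta_2)\}\times\mathbb{T}$.
   Context: A rational inner function (RIF) on $\mathbb{D}^3$ is a rational function holomorphic on the tridisk with unimodular radial limits a.e. on $\mathbb{T}^3$; it is written $\phi=\tilde p/p$ with $p$ zero-free on $\mathbb{D}^3$, $p,\tilde p$ without common factors, $\tilde p(z)=z_1^mz_2^nz_3\overline{p(1/\bar z_1,1/\bar z_2,1/\bar z_3)}$ for degree $(m,n,1)$. Irreducibility gives that $p_1$ and $p_2$ share no common factors. $\mathcal{Z}_p$ is the zero set of $p$. *)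

(* Defs.v *)
From HB Require Import structures.
From mathcomp Require Import all_boot all_order all_algebra.
From mathcomp Require Import reals.
From mathcomp Require Import complex.
From mathcomp Require Import mpoly.

Set Implicit Arguments.
Unset Strict Implicit.
Unset Printing Implicit Defensive.

Import Order.TTheory GRing.Theory Num.Theory.
Local Open Scope ring_scope.
Local Open Scope complex_scope.

Definition Cx (R : realType) := R[i].

(* Polynomials in three complex variables z1 z2 z3 (indices 0,1,2). *)
Notation poly3 R := {mpoly (Cx R)[3]}.

Definition ev3 (R : realType) (p : poly3 R) (z1 z2 z3 : Cx R) : Cx R :=
  p.@[fun i : 'I_3 => nth 0 [:: z1; z2; z3] i].

Definition degvar (R : realType) (p : poly3 R) (i : 'I_3) : nat :=
  \max_(d <- msupp p) d i.

Definition has_degree (R : realType) (p : poly3 R) (m n : nat) : Prop :=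
  [/\ degvar p (@inord 2 0) = m, degvar p (@inord 2 1) = n
    & degvar p (@inord 2 2) = 1%N].

(* Reflection p~(z) = z1^m z2^n z3 conj(p(1/conj z1, 1/conj z2, 1/conj z3)),
   written coefficientwise: the coefficient of z^(a,b,c) in p~ is the
   conjugate of the coefficient of z^(m-a,n-b,1-c) in p. *)
Definition reflect_poly (R : realType) (m n : nat) (p : poly3 R) : poly3 R :=
  \sum_(d <- msupp p)
     ((p@_d)^*)%C *: 'X_[ [multinom (nth 0%N [:: m; n; 1%N] i - d i)%N | i < 3] ].

Definition nonconstant (R : realType) (q : poly3 R) : Prop := (1 < msize q)%N.

Definition irreducible3 (R : realType) (p : poly3 R) : Prop :=
  nonconstant p /\
  forall q r : poly3 R, p = q * r -> ~ nonconstant q \/ ~ nonconstant r.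

Definition no_common_factor (R : realType) (p q : poly3 R) : Prop :=
  forall f : poly3 R, (exists a, p = f * a) -> (exists b, q = f * b) ->
    ~ nonconstant f.

Definition in_disk (R : realType) (z : Cx R) : Prop := `|z| < 1.
Definition in_circle (R : realType) (z : Cx R) : Prop := `|z| = 1.

Definition zero_free_tridisk (R : realType) (p : poly3 R) : Prop :=
  forall z1 z2 z3, in_disk z1 -> in_disk z2 -> in_disk z3 -> ev3 p z1 z2 z3 != 0.

(* phi = p~/p is an irreducible rational inner function on D^3 of degree
   (m,n,1): p zero-free on D^3, p of degree (m,n,1), p and p~ without common
   factors, and p irreducible. *)
Definition irreducible_RIF_data (R : realType) (m n : nat) (p : poly3 R) : Prop :=
  [/\ zero_free_tridisk p, has_degree p m n,
      no_common_factor p (reflect_poly m n p) & irreducible3 p].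

(* Main.v *)
Require Import Defs.
From HB Require Import structures.
From mathcomp Require Import all_boot all_order all_algebra all_field.
From mathcomp Require Import reals complex mpoly.
From mathcomp Require Import zify ring.
Import Order.TTheory GRing.Theory Num.Theory.
Set Implicit Arguments.
Unset Strict Implicit.
Unset Printing Implicit Defensive.
Local Open Scope ring_scope.

Section Main.
Variable C : numClosedFieldType.
Local Notation A := {poly C}.
Local Notation B := {poly {poly C}}.
Local Notation M := {mpoly C[3]}.

Definition evx (x : C) (P : B) : {poly C} := map_poly (horner_eval x) P.

Lemma evxM x P Q : evx x (P * Q) = evx x P * evx x Q.
Proof. by rewrite /evx rmorphM. Qed.
Lemma evxD x P Q : evx x (P + Q) = evx x P + evx x Q.
Proof. by rewrite /evx rmorphD. Qed.
Lemma evxC x (c : A) : evx x c%:P = (c.[x])%:P.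
Proof. by rewrite /evx map_polyC. Qed.
Lemma coef_evx x P i : (evx x P)`_i = (P`_i).[x].
Proof. by rewrite /evx coef_map. Qed.

Lemma poly_all_roots (q : {poly C}) : (forall y, q.[y] = 0) -> q = 0.
Proof.
move=> h; apply/eqP; apply/negPn/negP => q0.
have := @max_poly_roots _ q [seq i%:R | i <- iota 0 (size q)] q0.
rewrite size_map size_iota ltnn => H; suff: false by []; apply: H.
  by apply/allP => y _; apply/rootP/h.
rewrite map_inj_uniq ?iota_uniq //.
by move=> i j /eqP; rewrite eqr_nat => /eqP.
Qed.

Lemma BZ (P : B) : (forall x y, (evx x P).[y] = 0) -> P = 0.
Proof.
move=> h; apply/polyP => i; rewrite coef0; apply: poly_all_roots => x.
have e := poly_all_roots (h x).
by rewrite -coef_evx e coef0.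
Qed.

Lemma ROOTS (q : {poly C}) : q != 0 -> exists s : seq C, forall x, root q x -> x \in s.
Proof.
move=> q0; case: (closed_field_poly_normal q) => rs hq; exists rs => x.
by rewrite {1}hq rootZ ?lead_coef_eq0 // root_prod_XsubC.
Qed.

Lemma divX (P : B) (a : C) : evx a P = 0 ->
  exists P', P = ('X - a%:P)%:P * P'.
Proof.
move=> h; exists (map_poly (fun q => q %/ ('X - a%:P)) P).
apply/polyP => i; rewrite coefCM coef_map_id0 ?div0p //.
have : root P`_i a by rewrite /root -coef_evx h coef0.
by rewrite -dvdp_XsubCl => /divpK; rewrite mulrC.
Qed.

Lemma step (F g a : B) (c : A) : c != 0 -> (1 < size c)%N -> c%:P * F = a * g ->
  exists (c' : A) (a' g' : B) (h : A), [/\ c' != 0, (size c' < size c)%N,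
      c'%:P * F = a' * g', size g' = size g & g = h%:P * g'].
Proof.
move=> c0 c1 e.
have [al ral] : exists al, root c al by apply/closed_rootP; rewrite neq_ltn c1 orbT.
set d := 'X - al%:P.
have d0 : d != 0 by rewrite polyXsubC_eq0.
have dc : d %| c by rewrite dvdp_XsubCl.
set c' := c %/ d.
have ce : c = c' * d by rewrite divpK.
have c'0 : c' != 0 by apply: contra c0; rewrite ce => /eqP ->; rewrite mul0r.
have sc : (size c' < size c)%N.
  by rewrite ce size_mul // size_XsubC addn2.
have dI : injective (fun X : B => d%:P * X).
  by apply: mulfI; rewrite polyC_eq0.
have : evx al a * evx al g = 0.
  by rewrite -evxM -e evxM evxC (rootP ral) mul0r.
move/eqP; rewrite mulf_eq0 => /orP [] /eqP /divX [P' eP'].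
- exists c', P', g, 1; split => //; last by rewrite mul1r.
  apply: dI => /=; rewrite mulrA -polyCM [d * c']mulrC -ce e eP'.
  by rewrite mulrA.
- exists c', a, P', d; split => //.
  + apply: dI => /=; rewrite mulrA -polyCM [d * c']mulrC -ce e eP'.
    by rewrite mulrCA.
  + by rewrite eP' size_Cmul.
Qed.

Lemma Gauss n (F G g a b : B) (c1 c2 : A) : (size c1 + size c2 <= n)%N ->
  c1 != 0 -> c2 != 0 -> (1 < size g)%N ->
  c1%:P * F = a * g -> c2%:P * G = b * g ->
  exists D a' b' : B, [/\ (1 < size D)%N, F = D * a' & G = D * b'].
Proof.
elim: n F G g a b c1 c2 => [|n IH] F G g a b c1 c2 hs c10 c20 hg e1 e2.
  by move: hs; rewrite leqn0 addn_eq0 size_poly_eq0 (negPf c10).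
case: (ltnP 1 (size c1)) => h1.
  have [c1' [a' [g' [h [c1'0 s1 e1' sg eg]]]]] := step c10 h1 e1.
  apply: (IH F G g' a' (b * h%:P) c1' c2) => //.
  - by move: hs s1; clear; lia.
  - by rewrite sg.
  - by rewrite e2 eg mulrA.
case: (ltnP 1 (size c2)) => h2.
  have [c2' [b' [g' [h [c2'0 s2 e2' sg eg]]]]] := step c20 h2 e2.
  apply: (IH F G g' (a * h%:P) b' c1 c2') => //.
  - by move: hs s2; clear; lia.
  - by rewrite sg.
  - by rewrite e1 eg mulrA.
have inv (c : A) (X Y : B) : c != 0 -> (size c <= 1)%N -> c%:P * X = Y ->
    X = ((c`_0)^-1)%:P%:P * Y.
  move=> c0 sc <-; rewrite mulrA -polyCM.
  rewrite {2}(size1_polyC sc) -polyCM mulVf ?mul1r //.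
  by apply: contra c0 => /eqP c00; rewrite (size1_polyC sc) c00.
exists g, (((c1`_0)^-1)%:P%:P * a), (((c2`_0)^-1)%:P%:P * b); split => //.
  by rewrite (inv c1 F (a * g)) //; ring.
by rewrite (inv c2 G (b * g)) //; ring.
Qed.

Lemma CORE (F G : B) :
  (forall D a b : B, F = D * a -> G = D * b -> exists c : C, D = c%:P%:P) ->
  exists s : seq (C * C), forall x y,
    (evx x F).[y] = 0 -> (evx x G).[y] = 0 -> (x, y) \in s.
Proof.
move=> ncf.
have sD (D : B) : (1 < size D)%N -> forall a b, F = D * a -> G = D * b -> False.
  move=> sD a b eF eG; have [c ec] := ncf D a b eF eG.
  by move: sD; rewrite ec size_polyC; case: (_ != 0).
have nz : (F != 0) || (G != 0).
  case: (eqVneq F 0) => F0 //=; case: (eqVneq G 0) => G0 //.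
  by exfalso; apply: (sD 'X _ 0 0); rewrite ?size_polyX ?mulr0.
have g0 : gcdp F G != 0 by rewrite gcdp_eq0 negb_and.
case: (ltnP 1 (size (gcdp F G))) => hg.
  move: (dvdp_gcdl F G) => /Pdiv.Idomain.dvdpP [[c1 a] /= c10 e1].
  move: (dvdp_gcdr F G) => /Pdiv.Idomain.dvdpP [[c2 b] /= c20 e2].
  rewrite -mul_polyC in e1; rewrite -mul_polyC in e2.
  have [D [a' [b' [sD' eF eG]]]] := Gauss (leqnn _) c10 c20 hg e1 e2.
  by case: (sD D sD' a' b').
set r := (gcdp F G)`_0.
have gE : gcdp F G = r%:P by apply: size1_polyC.
have r0 : r != 0 by move: g0; rewrite gE polyC_eq0.
move: (egcdpE F G) => /eqpP [[k1 k2] /= /andP [k10 k20]].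
rewrite gE -!mul_polyC -polyCM => e.
have rho0 : k1 * r != 0 by rewrite mulf_neq0.
have key x y : (evx x F).[y] = 0 -> (evx x G).[y] = 0 -> root (k1 * r) x.
  move=> hF hG; apply/rootP.
  have := congr1 (fun P => (evx x P).[y]) e => /=.
  rewrite evxC hornerC => ->.
  by rewrite evxM evxD !evxM !hornerE hF hG !mulr0 addr0 mulr0.
have [rs hrs] := ROOTS rho0.
have hal al : exists sa : seq C, forall y,
    (evx al F).[y] = 0 -> (evx al G).[y] = 0 -> y \in sa.
  case: (eqVneq (evx al F) 0) => hF.
    case: (eqVneq (evx al G) 0) => hG.
      have [F' eF] := divX hF; have [G' eG] := divX hG.
      have [c ec] := ncf _ _ _ eF eG.
      have ec' : 'X - al%:P = c%:P by apply: polyC_inj.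
      have := size_XsubC al; rewrite ec' size_polyC.
      by case: (c != 0).
    have [s hs] := ROOTS hG; exists s => y _ hy; apply: hs; exact/rootP.
  have [s hs] := ROOTS hF; exists s => y hy _; apply: hs; exact/rootP.
have [S hS] : exists S : seq (C * C), forall x y, x \in rs ->
    (evx x F).[y] = 0 -> (evx x G).[y] = 0 -> (x, y) \in S.
  elim: rs {hrs} => [|al rs [S hS]]; first by exists [::].
  have [sa hsa] := hal al.
  exists ([seq (al, y) | y <- sa] ++ S) => x y.
  rewrite in_cons => /orP [/eqP -> | hx] hF hG; rewrite mem_cat.
    by apply/orP; left; apply: map_f; apply: hsa.
  by rewrite (hS x y hx hF hG) orbT.
exists S => x y hF hG; apply: hS => //; apply: hrs; exact: (key x y hF hG).
Qed.

Definition i0 : 'I_3 := @Ordinal 3 0 isT.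
Definition i1 : 'I_3 := @Ordinal 3 1 isT.
Definition i2 : 'I_3 := @Ordinal 3 2 isT.

Definition Phi (P : B) : M :=
  (map_poly (horner_eval ('X_i0 : M) \o map_poly (@mpolyC 3 C)) P).['X_i1].

Lemma PhiM P Q : Phi (P * Q) = Phi P * Phi Q.
Proof. by rewrite /Phi rmorphM hornerM. Qed.
Lemma PhiD P Q : Phi (P + Q) = Phi P + Phi Q.
Proof. by rewrite /Phi rmorphD hornerD. Qed.
Lemma Phi0 : Phi 0 = 0.
Proof. by rewrite /Phi rmorph0 horner0. Qed.
Lemma PhiC (c : C) : Phi c%:P%:P = c%:MP.
Proof. by rewrite /Phi map_polyC hornerC /= horner_evalE map_polyC hornerC. Qed.
Lemma PhiXx k : Phi ('X^k)%:P = 'X_i0 ^+ k.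
Proof. by rewrite /Phi map_polyC hornerC /= horner_evalE map_polyXn hornerXn. Qed.
Lemma PhiXy k : Phi 'X^k = 'X_i1 ^+ k.
Proof. by rewrite /Phi map_polyXn hornerXn. Qed.
Lemma PhiSum (I : Type) (r : seq I) (P : pred I) (F : I -> B) :
  Phi (\sum_(i <- r | P i) F i) = \sum_(i <- r | P i) Phi (F i).
Proof. exact: (big_morph Phi PhiD Phi0). Qed.

Lemma Phi_eval v P : (Phi P).@[v] = (evx (v i0) P).[v i1].
Proof.
rewrite /Phi -horner_map /= mevalXU -map_poly_comp /evx; congr (_.[_]).
apply: eq_map_poly => q /=.
rewrite horner_evalE -horner_map /= mevalXU -map_poly_comp horner_evalE.
rewrite (@eq_map_poly _ _ _ idfun) ?map_poly_id // => c /=.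
by rewrite mevalC.
Qed.

Definition mono (m : 'X_{1..3}) : B := ('X^(m i0))%:P * 'X^(m i1).

Lemma XE (m : 'X_{1..3}) :
  'X_[m] = 'X_i0 ^+ m i0 * 'X_i1 ^+ m i1 * 'X_i2 ^+ m i2 :> M.
Proof.
rewrite mpolyXE_id !big_ord_recr big_ord0 /=.
have -> : widen_ord (leqnSn 2) (widen_ord (leqnSn 1) ord_max) = i0 by apply/val_inj.
have -> : widen_ord (leqnSn 2) ord_max = i1 by apply/val_inj.
have -> : ord_max = i2 by apply/val_inj.
by rewrite mul1r.
Qed.

Lemma Phi_mono (c : C) m :
  Phi (c%:P%:P * mono m) = c%:MP * ('X_i0 ^+ m i0 * 'X_i1 ^+ m i1).
Proof. by rewrite /mono !PhiM PhiC PhiXx PhiXy. Qed.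


Lemma evxB x P Q : evx x (P - Q) = evx x P - evx x Q.
Proof. by rewrite /evx rmorphB. Qed.
Lemma evxCC x (c : C) : evx x c%:P%:P = c%:P.
Proof. by rewrite evxC hornerC. Qed.

Section Dec.
Variable p : M.
Definition S0 := \sum_(m <- msupp p | m i2 == 0%N) p@_m *: 'X_[m].
Definition S1 := \sum_(m <- msupp p | m i2 != 0%N) p@_m *: 'X_[m].
Definition F2 := \sum_(m <- msupp p | m i2 == 0%N) (p@_m)%:P%:P * mono m.
Definition G2 := \sum_(m <- msupp p | m i2 != 0%N) (p@_m)%:P%:P * mono m.

Lemma pS : p = S0 + S1.
Proof. by rewrite {1}(mpolyE p) (bigID (fun m : 'X_{1..3} => m i2 == 0%N)). Qed.

Lemma S0E : S0 = Phi F2.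
Proof.
rewrite PhiSum; apply: eq_bigr => m /eqP h.
by rewrite Phi_mono XE h expr0 mulr1 mul_mpolyC.
Qed.

Lemma S1E : (forall m, m \in msupp p -> (m i2 <= 1)%N) -> S1 = 'X_i2 * Phi G2.
Proof.
move=> hle; rewrite PhiSum mulr_sumr /S1 big_seq_cond [RHS]big_seq_cond.
apply: eq_bigr => m /andP [hm h].
have e : m i2 = 1%N by move: h (hle m hm); case: (m i2) => [|[|k]].
by rewrite Phi_mono XE e expr1 -mul_mpolyC [_ * 'X_i2]mulrC mulrCA.
Qed.
End Dec.

Definition vv (x y z : C) : 'I_3 -> C := fun i => nth 0 [:: x; y; z] i.
Lemma vv0 x y z : vv x y z i0 = x. Proof. by []. Qed.
Lemma vv1 x y z : vv x y z i1 = y. Proof. by []. Qed.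
Lemma vv2 x y z : vv x y z i2 = z. Proof. by []. Qed.

Lemma main_C (p : M) :
  (forall m, m \in msupp p -> (m i2 <= 1)%N) ->
  (exists m, m \in msupp p /\ m i2 = 1%N) ->
  (forall q r : M, p = q * r -> ~ (1 < msize q)%N \/ ~ (1 < msize r)%N) ->
  exists s : seq (C * C), forall x y,
    (forall z : C, `|z| = 1 -> p.@[vv x y z] = 0) -> (x, y) \in s.
Proof.
move=> hle [ms [hms hms2]] irr.
have ep : p = Phi (F2 p) + 'X_i2 * Phi (G2 p) by rewrite {1}(pS p) (S0E p) (S1E hle).
have G0 : G2 p != 0.
  apply/eqP => G0; have e1 : S1 p = 0 by rewrite (S1E hle) G0 Phi0 mulr0.
  have : p@_ms = (S0 p)@_ms by rewrite {1}(pS p) e1 addr0.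
  rewrite /S0 raddf_sum /= => hp.
  have : \sum_(m <- msupp p | m i2 == 0%N) (p@_m *: 'X_[m])@_ms = 0.
    apply: big1 => m /eqP h.
    rewrite mcoeffZ mcoeffX; case: eqP => [em|_]; last by rewrite mulr0.
    by move: h; rewrite em hms2.
  by rewrite -hp => hp0; move: hms; rewrite mcoeff_msupp hp0 eqxx.
have ev x y z : p.@[vv x y z] =
    (evx x (F2 p)).[y] + z * (evx x (G2 p)).[y].
  by rewrite {1}ep mevalD mevalM mevalXU !Phi_eval.
have const (q : M) : ~ (1 < msize q)%N -> forall v, q.@[v] = q@_0.
  move=> h v; have h' : (msize q <= 1)%N by rewrite leqNgt; apply/negP.
  by rewrite {1}(msize1_polyC h') mevalC.
have ncf : forall D a b : B, F2 p = D * a -> G2 p = D * b ->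
    exists c : C, D = c%:P%:P.
  move=> D a b eF eG.
  have e : p = Phi D * (Phi a + 'X_i2 * Phi b) by rewrite {1}ep eF eG !PhiM; ring.
  case: (irr _ _ e) => [hD | hr].
    exists ((Phi D)@_0); apply/eqP; rewrite -subr_eq0; apply/eqP.
    apply: BZ => x y.
    have := const _ hD (vv x y 0); rewrite Phi_eval vv0 vv1 => h.
    by rewrite evxB evxCC hornerD hornerN hornerC h subrr.
  have b0 : b = 0.
    apply: BZ => x y.
    have h0 := const _ hr (vv x y 0); have h1 := const _ hr (vv x y 1).
    rewrite mevalD mevalM mevalXU !Phi_eval vv0 vv1 vv2 in h0.
    rewrite mevalD mevalM mevalXU !Phi_eval vv0 vv1 vv2 in h1.
    by move: h1; rewrite -h0 mul0r addr0 mul1r -{2}[(evx x a).[y]]addr0 => /addrI.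
  by move: G0; rewrite eG b0 mulr0 eqxx.
have [s hs] := CORE ncf.
exists s => x y h; apply: hs.
  have h1 := h 1 (normr1 _); have h2 := h (-1) (normrN1 _).
  rewrite ev in h1; rewrite ev in h2.
  set f := (evx x (F2 p)).[y] in h1 h2 *; set g := (evx x (G2 p)).[y] in h1 h2 *.
  have : f *+ 2 = 0.
    have -> : f *+ 2 = (f + 1 * g) + (f + (-1) * g) by rewrite mulr2n; ring.
    by rewrite h1 h2 addr0.
  by move/eqP; rewrite mulrn_eq0 /= => /eqP.
have h1 := h 1 (normr1 _); have h2 := h (-1) (normrN1 _).
rewrite ev in h1; rewrite ev in h2.
set f := (evx x (F2 p)).[y] in h1 h2 *; set g := (evx x (G2 p)).[y] in h1 h2 *.
have : g *+ 2 = 0.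
  have -> : g *+ 2 = (f + 1 * g) - (f + (-1) * g) by rewrite mulr2n; ring.
  by rewrite h1 h2 subr0.
by move/eqP; rewrite mulrn_eq0 /= => /eqP.
Qed.

End Main.

Theorem lemma3p4 (R : realType) (m n : nat) (p : {mpoly (Cx R)[3]}) :
  irreducible_RIF_data m n p ->
  exists s : seq (Cx R * Cx R),
    forall zeta1 zeta2 : Cx R,
      in_circle zeta1 -> in_circle zeta2 ->
      (forall zeta3 : Cx R, in_circle zeta3 -> ev3 p zeta1 zeta2 zeta3 = 0) ->
      (zeta1, zeta2) \in s.
Proof.
move=> [_ [_ _ d2] _ [_ irr]].
have ei2 : (@inord 2 2) = i2 by apply/val_inj; rewrite /= inordK.
move: d2; rewrite /degvar ei2 => d2.
have hle : forall m0 : 'X_{1..3}, m0 \in msupp p -> (m0 i2 <= 1)%N.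
  move=> m0 hm.
  by have := (@leq_bigmax_seq _ (msupp p) xpredT (fun d : 'X_{1..3} => d i2) m0 hm isT); rewrite d2.
have hex : exists m0 : 'X_{1..3}, m0 \in msupp p /\ m0 i2 = 1%N.
  case: (boolP (has (fun m0 : 'X_{1..3} => m0 i2 == 1%N) (msupp p))).
    by move=> /hasP [m0 hm /eqP e]; exists m0.
  move=> /hasPn hn.
  have : (\max_(d <- msupp p) d i2 = 0)%N.
    rewrite big_seq; apply: big1 => m0 hm.
    by move: (hle m0 hm) (hn m0 hm); case: (m0 i2) => [|[|k]].
  by rewrite d2.
have [s hs] := main_C hle hex irr.
by exists s => z1 z2 _ _ h; apply: hs => z hz; apply: h.
Qed.
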